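(* Let $\mathcal H$ be the $5$-uniform hypergraph defined below and let $e,f$ be two edges of $\mathcal H$. Then every monomorphism $\phi : V(\mathcal{H}_{ef}) \to V(\mathcal{H})$ is the identity.
   Context: $\mathcal{H}$ has vertex set $\{z, v_1,\dots,v_9\}$ and edges $r=\{z,v_1,v_3,v_5,v_8\}$, $g=\{z,v_2,v_4,v_7,v_9\}$, $a=\{v_1,v_4,v_6,v_8,v_9\}$, $b=\{v_9,v_1,v_2,v_3,v_4\}$, and $e_i=\{v_i,v_{i+1},v_{i+2},v_{i+3},v_{i+4}\}$ for $i=1,\dots,5$. $\mathcal{H}_{ef}$ is the hypergraph with edge set $E(\mathcal H)\setminus\{e,f\}$, and $V(\mathcal H_{ef})$ is the union of its edges. A monomorphism $\phi: V(\mathcal{H}_{ef})\to V(\mathcal{H})$ is an injective map such that $\{\phi(y): y\in x\}$ is an edge of $\mathcal H$ for every edge $x$ of $\mathcal H_{ef}$; ''identity'' means $\phi(y)=y$ for all $y\in V(\mathcal H_{ef})$. *)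

(* Defs.v *)
From mathcomp Require Import all_boot.
Set Implicit Arguments. Unset Strict Implicit. Unset Printing Implicit Defensive.

Definition vtx := 'I_10.
Definition z : vtx := inord 0.
Definition v (i : nat) : vtx := inord i.

Definition edge_r : {set vtx} := [set z; v 1; v 3; v 5; v 8].
Definition edge_g : {set vtx} := [set z; v 2; v 4; v 7; v 9].
Definition edge_a : {set vtx} := [set v 1; v 4; v 6; v 8; v 9].
Definition edge_b : {set vtx} := [set v 9; v 1; v 2; v 3; v 4].
Definition edge_e (i : nat) : {set vtx} :=
  [set v i; v i.+1; v i.+2; v i.+3; v i.+4].

Definition EH : {set {set vtx}} :=
  [set edge_r; edge_g; edge_a; edge_b;
       edge_e 1; edge_e 2; edge_e 3; edge_e 4; edge_e 5].

Definition E_ef (e f : {set vtx}) : {set {set vtx}} := EH :\ e :\ f.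

Definition V_ef (e f : {set vtx}) : {set vtx} := \bigcup_(x in E_ef e f) x.

(* phi (a function defined on all vertices, only its restriction to V(H_ef)
   matters) is a monomorphism V(H_ef) -> V(H). *)
Definition monomorphism (e f : {set vtx}) (phi : vtx -> vtx) : Prop :=
  {in V_ef e f &, injective phi} /\
  (forall x, x \in E_ef e f -> phi @: x \in EH).

(* Main.v *)
Require Import Defs.
From mathcomp Require Import all_boot.

Definition EHs : seq {set vtx} := [:: edge_r; edge_g; edge_a; edge_b;
       edge_e 1; edge_e 2; edge_e 3; edge_e 4; edge_e 5].

Definition ord10 (i : nat) : vtx := Ordinal (n := 10) (m := i %% 10) (@ltn_pmod i 10 isT).

Lemma inordE i : i < 10 -> inord i = ord10 i :> vtx.
Proof. by move=> hi; apply: val_inj; rewrite /= inordK // modn_small. Qed.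

Definition allv : seq vtx := map ord10 [:: 5; 4; 2; 3; 1; 9; 6; 0; 8; 7].

Lemma in_allv (y : vtx) : y \in allv.
Proof.
apply/mapP; exists (val y); last by apply: val_inj; rewrite /= modn_small.
by case: y => m /= hm; move: hm; do 10 (case: m => [//|m]).
Qed.

Definition EHl : seq (seq vtx) := map (map ord10) [:: [:: 0; 1; 3; 5; 8]; [:: 0; 2; 4; 7; 9];
  [:: 1; 4; 6; 8; 9]; [:: 9; 1; 2; 3; 4];
  [:: 1; 2; 3; 4; 5]; [:: 2; 3; 4; 5; 6]; [:: 3; 4; 5; 6; 7];
  [:: 4; 5; 6; 7; 8]; [:: 5; 6; 7; 8; 9]].

Lemma bridge k x : k < 9 -> (x \in nth set0 EHs k) = (x \in nth [::] EHl k).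
Proof.
move=> hk; do 9 (case: k hk => [_|k hk]; first by rewrite /= /edge_r /edge_g /edge_a /edge_b /edge_e /z /v !inordE // !inE ?orbA).
by [].
Qed.

Lemma inEH x : (x \in EH) = (x \in EHs).
Proof. by rewrite /EH /EHs !inE !orbA. Qed.

Fixpoint memv (x : vtx) (l : seq vtx) : bool :=
  match l with [::] => false | y :: l' => if eqn x y then true else memv x l' end.

Lemma memvE x l : memv x l = (x \in l).
Proof.
elim: l => [|y l IH] //=; rewrite in_cons IH.
case: (@eqnP x y) => [h|h].
  have -> : x = y by apply: val_inj.
  by rewrite eqxx.

by have -> : (x == y) = false by apply/eqP => E; apply: h; rewrite E.
Qed.

Fixpoint allb {T} (f : T -> bool) (l : seq T) : bool :=
  match l with [::] => true | a :: l' => if f a then allb f l' else false end.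
Fixpoint hasb {T} (f : T -> bool) (l : seq T) : bool :=
  match l with [::] => false | a :: l' => if f a then true else hasb f l' end.

Lemma allbE T (f : T -> bool) l : allb f l = all f l.
Proof. by elim: l => //= a l ->; case: (f a). Qed.
Lemma hasbE T (f : T -> bool) l : hasb f l = has f l.
Proof. by elim: l => //= a l ->; case: (f a). Qed.


Definition beq (a b : bool) : bool := if a then b else ~~ b.

Lemma beqE a b : beq a b = (a == b).
Proof. by case: a; case: b. Qed.

Definition step (El Fl : seq vtx) (S : seq (vtx * seq vtx)) : seq (vtx * seq vtx) :=
  map (fun p => (p.1, filter (fun w => beq (memv w Fl) (memv p.1 El)) p.2)) S.

Definition nonnil (s : seq vtx) : bool := if s is [::] then false else true.

Fixpoint esearch (H : seq (seq vtx)) (S : seq (vtx * seq vtx)) (rest : seq (seq vtx)) : bool :=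
  match rest with
  | [::] => allb (fun p : vtx * seq vtx => allb (fun w : vtx => eqn w p.1) p.2) S
  | El :: r => allb (fun Fl => let S' := step El Fl S in
                 if allb (fun p : vtx * seq vtx => nonnil p.2) S' then esearch H S' r else true) H
  end.

Lemma esearch_sound (H : seq (seq vtx)) (L : seq vtx) (phi : vtx -> vtx) :
  forall rest : seq (seq vtx),
  (forall El, El \in rest -> exists2 Fl, Fl \in H &
      forall u, u \in L -> (phi u \in Fl) = (u \in El)) ->
  forall S : seq (vtx * seq vtx), (forall p, p \in S -> p.1 \in L /\ phi p.1 \in p.2) ->
  esearch H S rest -> forall p, p \in S -> phi p.1 = p.1.
Proof.
elim=> [|El r IH] hE S HS.
  rewrite /= allbE => /allP Ha p Hp.
  have := Ha p Hp; rewrite allbE => /allP /(_ (phi p.1)).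
  by move=> H1; case: (HS p Hp) => _ /H1 /eqnP E; apply: val_inj.
rewrite /= allbE => /allP Ha.
have [Fl HF HFl] := hE El (mem_head _ _).
have HS' : forall p, p \in step El Fl S -> p.1 \in L /\ phi p.1 \in p.2.
  move=> p /mapP [q Hq ->] /=; have [qL qP] := HS q Hq; split => //.
  by rewrite mem_filter beqE !memvE HFl // eqxx qP.
have := Ha Fl HF; rewrite /=.
have -> : allb (fun p : vtx * seq vtx => nonnil p.2) (step El Fl S).
  rewrite allbE; apply/allP => p Hp; have [_ Hin] := HS' p Hp.
  by move: Hin; case: (p.2).
move=> Hs p Hp.
have IH' := IH (fun E HE => hE E (@mem_behead _ (El :: r) E HE)) _ HS' Hs.
have := IH' (p.1, [seq w <- p.2 | beq (memv w Fl) (memv p.1 El)]).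
by apply; apply/mapP; exists p.
Qed.

Definition Es_idx (i j : nat) : seq (seq vtx) :=
  [seq nth [::] EHl k | k <- iota 0 9 & (k != i) && (k != j)].
Definition L_idx (i j : nat) : seq vtx :=
  [seq x <- allv | has (fun l => x \in l) (Es_idx i j)].

Definition check := all (fun i => all (fun j =>
   if i < j then esearch EHl [seq (u, allv) | u <- L_idx i j] (Es_idx i j) else true)
   (iota 0 9)) (iota 0 9).

Lemma check_true : check.
Proof. vm_compute. reflexivity. Qed.

Lemma Es_idx_sym i j : Es_idx i j = Es_idx j i.
Proof. by rewrite /Es_idx; congr map; apply: eq_filter => k; rewrite andbC. Qed.

Lemma distinct : all (fun k => all (fun l => (k != l) ==>
   has (fun x => (x \in nth [::] EHl k) != (x \in nth [::] EHl l)) allv) (iota 0 9)) (iota 0 9).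
Proof. vm_compute. reflexivity. Qed.

Lemma EHs_inj k l : k < 9 -> l < 9 -> nth set0 EHs k = nth set0 EHs l -> k = l.
Proof.
move=> hk hl Eq; apply/eqP; apply: contraT => nkl.
have := distinct => /allP /(_ k); rewrite mem_iota leq0n add0n hk => /(_ isT) /allP /(_ l).
rewrite mem_iota leq0n add0n hl => /(_ isT); rewrite nkl implyTb => /hasP [x _].
by rewrite -!bridge // Eq eqxx.
Qed.

Lemma inEHs E : E \in EHs -> exists2 k, k < 9 & E = nth set0 EHs k.
Proof. by move=> HE; exists (index E EHs); [rewrite -index_mem in HE | rewrite nth_index]. Qed.

Lemma img_mem (e f : {set vtx}) (phi : vtx -> vtx) :
  {in V_ef e f &, injective phi} ->
  forall E u, E \in E_ef e f -> u \in V_ef e f -> (phi u \in phi @: E) = (u \in E).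
Proof.
move=> inj E u HE Hu; apply/imsetP/idP => [[w wE Eq]|uE]; last by exists u.
have wV : w \in V_ef e f by apply/bigcupP; exists E.
by rewrite (inj _ _ Hu wV Eq).
Qed.

Theorem lemma4p12 (e f : {set vtx}) (phi : vtx -> vtx) :
  e \in EH -> f \in EH -> e != f ->
  monomorphism e f phi ->
  {in V_ef e f, forall y, phi y = y}.
Proof.
rewrite !inEH => /inEHs [i hi ->] /inEHs [j hj ->] Hef [inj hE] y Hy.
have Hij : i != j by apply: contraNneq Hef => ->.
have Hs : esearch EHl [seq (u, allv) | u <- L_idx i j] (Es_idx i j).
  have := check_true => /allP Hc.
  case: (ltngtP i j) => [lij|lji|eij]; last by rewrite eij eqxx in Hij.
    have := Hc i; rewrite mem_iota leq0n add0n hi => /(_ isT).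
    by move=> /allP /(_ j); rewrite mem_iota leq0n add0n hj lij => /(_ isT).
  have := Hc j; rewrite mem_iota leq0n add0n hj => /(_ isT).
  move=> /allP /(_ i); rewrite mem_iota leq0n add0n hi lji => /(_ isT).
  by rewrite /L_idx (Es_idx_sym j i).
have EsE : forall El, El \in Es_idx i j -> exists2 k, k < 9 &
    (El = nth [::] EHl k /\ nth set0 EHs k \in E_ef (nth set0 EHs i) (nth set0 EHs j)).
  move=> El /mapP [k]; rewrite mem_filter mem_iota add0n /= => /andP [/andP [ki kj] hk] ->.
  exists k => //; split => //.
  rewrite /E_ef !in_setD1 inEH mem_nth // andbT.
  apply/andP; split; apply/negP => /eqP /EHs_inj => /(_ hk).
    by move=> /(_ hj) /eqP; rewrite (negbTE kj).
  by move=> /(_ hi) /eqP; rewrite (negbTE ki).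
have LV : forall u, u \in L_idx i j -> u \in V_ef (nth set0 EHs i) (nth set0 EHs j).
  move=> u; rewrite mem_filter => /andP [/hasP [El HE uE] _].
  have [k hk [HEl HEk]] := EsE El HE.
  by apply/bigcupP; exists (nth set0 EHs k) => //; rewrite bridge // -HEl.
have yL : y \in L_idx i j.
  move: Hy => /bigcupP [E HE yE]; rewrite mem_filter in_allv andbT.
  move: HE; rewrite /E_ef !in_setD1 inEH => /and3P [Ef Ee /inEHs [k hk Ek]].
  apply/hasP; exists (nth [::] EHl k); last by rewrite -bridge // -Ek.
  apply/mapP; exists k => //; rewrite mem_filter mem_iota leq0n add0n hk !andbT.
  by apply/andP; split; apply/eqP => kE; [move: Ee | move: Ef]; rewrite Ek kE eqxx.
have := @esearch_sound EHl (L_idx i j) phi (Es_idx i j) _ _ _ Hs (y, allv).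
apply; last by apply/mapP; exists y.
- move=> El /EsE [k hk [-> HEk]].
  have := hE _ HEk; rewrite inEH => /inEHs [m hm Hm].
  exists (nth [::] EHl m); first by apply: mem_nth.
  move=> u uL; rewrite -bridge // -bridge // -Hm.
  by rewrite (@img_mem (nth set0 EHs i) (nth set0 EHs j) phi inj) //; apply: LV.
- by move=> p /mapP [u uL ->]; split => //; apply: in_allv.
Qed.
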